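(* Let $R$ be a ring with identity and $a,b,c\in R$. Then: (i) if $a$ is right annihilator $(b,c)$-invertible, then $b^\circ=(cab)^\circ$; (ii) if $a$ is left annihilator $(b,c)$-invertible, then ${}^\circ c={}^\circ(cab)$.
   Context: For $x\in R$: $x^\circ=\{r\in R: xr=0\}$, ${}^\circ x=\{r\in R: rx=0\}$. The element $a$ is right annihilator $(b,c)$-invertible if there is $y\in R$ with $c^\circ\subseteq y^\circ$ and $yab=b$; left annihilator $(b,c)$-invertible if there is $y\in R$ with ${}^\circ b\subseteq {}^\circ y$ and $cay=c$. *)

(* Defs.v *)
From mathcomp Require Import all_boot all_algebra.
Set Implicit Arguments. Unset Strict Implicit. Unset Printing Implicit Defensive.
Import GRing.Theory.
Local Open Scope ring_scope.

Definition rann (R : pzRingType) (x : R) : R -> Prop := fun r => x * r = 0.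
Definition lann (R : pzRingType) (x : R) : R -> Prop := fun r => r * x = 0.

Definition right_ann_bc_inv (R : pzRingType) (a b c : R) : Prop :=
  exists y : R, (forall r, rann c r -> rann y r) /\ y * a * b = b.

Definition left_ann_bc_inv (R : pzRingType) (a b c : R) : Prop :=
  exists y : R, (forall r, lann b r -> lann y r) /\ c * a * y = c.

(* Main.v *)
Require Import Defs.
From mathcomp Require Import all_boot all_algebra.
Local Open Scope ring_scope.
Import GRing.Theory.

Theorem proposition2p9 (R : pzRingType) (a b c : R) :
  (right_ann_bc_inv a b c -> forall r : R, rann b r <-> rann (c * a * b) r) /\
  (left_ann_bc_inv a b c -> forall r : R, lann c r <-> lann (c * a * b) r).
Proof.
split.
- move=> [y [Hy Hb]] r; rewrite /rann; split.
  + by move=> H; rewrite -mulrA H mulr0.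
  + move=> H.
    have H1 : rann c (a * b * r) by rewrite /rann !mulrA.
    have := Hy _ H1; rewrite /rann !mulrA Hb => ->. done.
- move=> [y [Hy Hc]] r; rewrite /lann; split.
  + by move=> H; rewrite !mulrA H !mul0r.
  + move=> H.
    have H1 : lann b (r * c * a) by rewrite /lann -H !mulrA.
    have := Hy _ H1; rewrite /lann -!mulrA (mulrA c) Hc => ->. done.
Qed.
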